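(* Let $\mathcal H$ be a 3-dimensional Hilbert space with orthonormal basis $|1,1\rangle,|2,1\rangle,|2,2\rangle$, let $E_1<E_2$ be real, and let $$H_0=E_1|1,1\rangle\langle1,1|+E_2\big(|2,1\rangle\langle2,1|+|2,2\rangle\langle2,2|\big),\qquad iH_I=d_1x_{11,21}+d_2x_{11,22},$$ with real $d_1,d_2$ not both zero. Then the real Lie algebra $L_0$ generated by $iH_0$ and $iH_I$ is 4-dimensional and isomorphic to $\mathfrak{su}(2)\oplus\mathfrak{u}(1)$; in particular $L_0$ does not contain $\mathfrak{su}(3)$, so the system with Hamiltonian $H_0+f(t)H_I$ is not completely controllable.
   Context: $x_{11,2k}=i\big(|1,1\rangle\langle2,k|+|2,k\rangle\langle1,1|\big)$ for $k=1,2$. The system with Hamiltonian $H_0+f(t)H_I$ ($f$ a real control field) is called completely controllable if the Lie algebra generated by $iH_0$ and $iH_I$ contains $\mathfrak{su}(3)$. *)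

(* Defs.v *)
From HB Require Import structures.
From mathcomp Require Import all_boot all_order all_algebra.
From mathcomp Require Import complex.
Set Implicit Arguments. Unset Strict Implicit. Unset Printing Implicit Defensive.
Import Order.TTheory GRing.Theory Num.Theory.
Local Open Scope ring_scope.

Section Defs.
Variable R : rcfType.
Local Notation C := (complex R).

Definition iC : C := Complex 0 1.
Definition rC (r : R) : C := Complex r 0.

Definition rscale n (r : R) (A : 'M[C]_n) : 'M[C]_n := rC r *: A.

Definition lie_br n (A B : 'M[C]_n) : 'M[C]_n := A *m B - B *m A.

Definition adj n (A : 'M[C]_n) : 'M[C]_n := (map_mx (@conjc R) A)^T.

Definition su n (X : 'M[C]_n) : Prop := adj X = - X /\ \tr X = 0.

Definition real_lie_subalg n (S : 'M[C]_n -> Prop) : Prop :=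
  [/\ S 0,
      forall A B, S A -> S B -> S (A + B),
      forall r A, S A -> S (rscale r A) &
      forall A B, S A -> S B -> S (lie_br A B)].

Definition lie_gen n (A B : 'M[C]_n) : 'M[C]_n -> Prop :=
  fun X => forall S, real_lie_subalg S -> S A -> S B -> S X.

Definition real_dim n (S : 'M[C]_n -> Prop) (k : nat) : Prop :=
  exists v : 'I_k -> 'M[C]_n,
    [/\ forall i, S (v i),
        forall c : 'I_k -> R, \sum_(i < k) rscale (c i) (v i) = 0 ->
                               forall i, c i = 0 &
        forall X, S X -> exists c : 'I_k -> R, X = \sum_(i < k) rscale (c i) (v i)].

Definition u1 (z : C) : Prop := conjc z = - z.

(* su(2) (+) u(1), realized as pairs (X, z), with componentwise operations
   and bracket [(X,z),(Y,w)] = ([X,Y], 0) *)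
Definition su2u1 (p : 'M[C]_2 * C) : Prop := su p.1 /\ u1 p.2.

Definition iso_su2_u1 (S : 'M[C]_3 -> Prop) : Prop :=
  exists phi : 'M[C]_3 -> 'M[C]_2 * C,
    [/\ forall A B, S A -> S B ->
          phi (A + B) = ((phi A).1 + (phi B).1, (phi A).2 + (phi B).2),
        forall r A, S A ->
          phi (rscale r A) = (rscale r (phi A).1, rC r * (phi A).2),
        forall A B, S A -> S B ->
          phi (lie_br A B) = (lie_br (phi A).1 (phi B).1, 0),
        forall A B, S A -> S B -> phi A = phi B -> A = B &
        forall p, su2u1 p <-> exists2 A, S A & phi A = p].

Definition completely_controllable (H0 HI : 'M[C]_3) : Prop :=
  forall X, su X -> lie_gen (iC *: H0) (iC *: HI) X.

(* basis |1,1> = index 0, |2,1> = index 1, |2,2> = index 2 *)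
Definition k11 : 'I_3 := @Ordinal 3 0 isT.
Definition k21 : 'I_3 := @Ordinal 3 1 isT.
Definition k22 : 'I_3 := @Ordinal 3 2 isT.

Definition H0 (E1 E2 : R) : 'M[C]_3 :=
  rC E1 *: delta_mx k11 k11 + rC E2 *: (delta_mx k21 k21 + delta_mx k22 k22).

Definition x11 (j : 'I_3) : 'M[C]_3 := iC *: (delta_mx k11 j + delta_mx j k11).

(* H_I defined by i H_I = d1 x_{11,21} + d2 x_{11,22} *)
Definition HI (d1 d2 : R) : 'M[C]_3 :=
  (- iC) *: (rC d1 *: x11 k21 + rC d2 *: x11 k22).

End Defs.

(* Main.v *)
Require Import Defs.
From HB Require Import structures.
From mathcomp Require Import all_boot all_order all_algebra.
From mathcomp Require Import complex ring lra.
Import Order.TTheory GRing.Theory Num.Theory.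
Local Open Scope ring_scope.

Section P.
Variable R : rcfType.
Local Notation C := (complex R).
Variables E1 E2 d1 d2 : R.
Definition Dd := d1^+2 + d2^+2.

Lemma cadd (a b c d : R) : Complex a b + Complex c d = Complex (a+c) (b+d) :> C.
Proof. by []. Qed.
Lemma cmul (a b c d : R) : Complex a b * Complex c d = Complex (a*c - b*d) (a*d + b*c) :> C.
Proof. by []. Qed.
Lemma copp (a b : R) : - Complex a b = Complex (-a) (-b) :> C.
Proof. by []. Qed.
Lemma c0 : 0 = Complex 0 0 :> C. Proof. by []. Qed.
Lemma c1 : 1 = Complex 1 0 :> C. Proof. by []. Qed.

Definition spanmx (a0 a1 a2 a3 : R) : 'M[C]_3 :=
  \matrix_(i < 3, j < 3)
   match nat_of_ord i, nat_of_ord j with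
   | 0,0 => Complex 0 (a0*E1 - a3*Dd)
   | 0,1 => Complex (a2*d1) (a1*d1)
   | 0,2 => Complex (a2*d2) (a1*d2)
   | 1,0 => Complex (-(a2*d1)) (a1*d1)
   | 2,0 => Complex (-(a2*d2)) (a1*d2)
   | 1,1 => Complex 0 (a0*E2 + a3*d1^+2)
   | 2,2 => Complex 0 (a0*E2 + a3*d2^+2)
   | _,_ => Complex 0 (a3*d1*d2)
   end.

Definition br (a0 a1 a2 a3 b0 b1 b2 b3 : R) :=
  ((0:R), (a0*b2 - a2*b0)*(E1-E2) + 2*Dd*(a2*b3 - a3*b2),
      (a0*b1 - a1*b0)*(E2-E1) - 2*Dd*(a1*b3 - a3*b1),
      2*(a1*b2 - a2*b1)).

Lemma br_spanmx a0 a1 a2 a3 b0 b1 b2 b3 :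
  lie_br (spanmx a0 a1 a2 a3) (spanmx b0 b1 b2 b3) =
  let: (c0,c1,c2,c3) := br a0 a1 a2 a3 b0 b1 b2 b3 in spanmx c0 c1 c2 c3.
Proof.
rewrite /lie_br /br; apply/matrixP => i j; rewrite !mxE !big_ord_recl !big_ord0 !mxE /=.
case: i => [[|[|[|i]]] Hi] //; case: j => [[|[|[|j]]] Hj] //=;
rewrite ?addr0 ?(cmul, cadd, copp) /Dd; congr Complex; ring.
Qed.
Ltac entries := apply/matrixP => -[[|[|[|?]]] ?] -[[|[|[|?]]] ?] //;
  rewrite !mxE ?big_ord_recl ?big_ord0 ?mxE /=.
Ltac csimp := rewrite ?addr0 ?add0r ?mulr1n ?mulr0n ?(cmul, cadd, copp).

Lemma spanmx_add a0 a1 a2 a3 b0 b1 b2 b3 :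
  spanmx a0 a1 a2 a3 + spanmx b0 b1 b2 b3 = spanmx (a0+b0) (a1+b1) (a2+b2) (a3+b3).
Proof. entries; csimp; rewrite /Dd; congr Complex; ring. Qed.

Lemma spanmx_scale r a0 a1 a2 a3 :
  rscale r (spanmx a0 a1 a2 a3) = spanmx (r*a0) (r*a1) (r*a2) (r*a3).
Proof. rewrite /rscale /rC; entries; csimp; rewrite /Dd; congr Complex; ring. Qed.

Lemma spanmx0 : spanmx 0 0 0 0 = 0.
Proof. entries; rewrite /Dd; congr Complex; ring. Qed.

Lemma gen0 : iC R *: H0 E1 E2 = spanmx 1 0 0 0.
Proof. rewrite /H0 /iC /rC; entries; csimp; rewrite /Dd; congr Complex; ring. Qed.

Lemma gen1 : iC R *: HI d1 d2 = spanmx 0 1 0 0.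
Proof. rewrite /HI /x11 /iC /rC; entries; csimp; rewrite /Dd; congr Complex; ring. Qed.

Definition SP (X : 'M[C]_3) := exists a0 a1 a2 a3, X = spanmx a0 a1 a2 a3.

Lemma SP_lie : real_lie_subalg SP.
Proof.
split.
- by exists 0, 0, 0, 0; rewrite spanmx0.
- move=> _ _ [a0 [a1 [a2 [a3 ->]]]] [b0 [b1 [b2 [b3 ->]]]].
  by rewrite spanmx_add; do 4 eexists.
- move=> r _ [a0 [a1 [a2 [a3 ->]]]]; by rewrite spanmx_scale; do 4 eexists.
- move=> _ _ [a0 [a1 [a2 [a3 ->]]]] [b0 [b1 [b2 [b3 ->]]]].
  by rewrite br_spanmx /=; do 4 eexists.
Qed.

Lemma L0_SP X : lie_gen (iC R *: H0 E1 E2) (iC R *: HI d1 d2) X -> SP X.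
Proof.
move=> H; apply: H; first exact: SP_lie.
- by rewrite gen0; do 4 eexists.
- by rewrite gen1; do 4 eexists.
Qed.

Hypothesis hE : E1 < E2.
Hypothesis hd : (d1 != 0) || (d2 != 0).

Lemma hne : E2 - E1 != 0.
Proof. by rewrite subr_eq0 gt_eqF. Qed.

Lemma Dpos : 0 < Dd.
Proof.
rewrite /Dd lt0r addr_ge0 ?sqr_ge0 // andbT paddr_eq0 ?sqr_ge0 // !sqrf_eq0 negb_and.
exact: hd.
Qed.

Lemma Dne : d1^+2 + d2^+2 != 0.
Proof. by have := Dpos; rewrite /Dd lt0r => /andP[]. Qed.

Lemma SP_L0 X : SP X -> lie_gen (iC R *: H0 E1 E2) (iC R *: HI d1 d2) X.
Proof.
move=> [a0 [a1 [a2 [a3 ->]]]] S [S0 SD SZ SB] Sg0 Sg1.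
rewrite gen0 in Sg0; rewrite gen1 in Sg1.
have S2 : S (spanmx 0 0 1 0).
  have -> : spanmx 0 0 1 0 = rscale (E2-E1)^-1 (lie_br (spanmx 1 0 0 0) (spanmx 0 1 0 0)).
    rewrite br_spanmx /= spanmx_scale; have := hne => hne'.
    congr spanmx; rewrite /Dd; field; done.
  exact: (SZ _ _ (SB _ _ Sg0 Sg1)).
have S3 : S (spanmx 0 0 0 1).
  have -> : spanmx 0 0 0 1 = rscale (2^-1) (lie_br (spanmx 0 1 0 0) (spanmx 0 0 1 0)).
    rewrite br_spanmx /= spanmx_scale.
    by congr spanmx; rewrite /Dd; field.
  exact: (SZ _ _ (SB _ _ Sg1 S2)).
have -> : spanmx a0 a1 a2 a3 = rscale a0 (spanmx 1 0 0 0) + rscale a1 (spanmx 0 1 0 0)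
   + rscale a2 (spanmx 0 0 1 0) + rscale a3 (spanmx 0 0 0 1).
  by rewrite !spanmx_scale !spanmx_add; congr spanmx; ring.
exact: SD _ _ (SD _ _ (SD _ _ (SZ _ _ Sg0) (SZ _ _ Sg1)) (SZ _ _ S2)) (SZ _ _ S3).
Qed.


Definition vb (i : 'I_4) : 'M[C]_3 :=
  match nat_of_ord i with
  | 0 => spanmx 1 0 0 0 | 1 => spanmx 0 1 0 0 | 2 => spanmx 0 0 1 0 | _ => spanmx 0 0 0 1 end.
Definition q0 : 'I_4 := @Ordinal 4 0 isT.
Definition q1 : 'I_4 := @Ordinal 4 1 isT.
Definition q2 : 'I_4 := @Ordinal 4 2 isT.
Definition q3 : 'I_4 := @Ordinal 4 3 isT.

Lemma sum_vb (c : 'I_4 -> R) :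
  \sum_(i < 4) rscale (c i) (vb i) = spanmx (c q0) (c q1) (c q2) (c q3).
Proof.
rewrite !big_ord_recl big_ord0 /=.
have -> : lift ord0 (lift ord0 (lift ord0 ord0)) = q3 :> 'I_4 by apply: val_inj.
have -> : lift ord0 (lift ord0 ord0) = q2 :> 'I_4 by apply: val_inj.
have -> : lift ord0 ord0 = q1 :> 'I_4 by apply: val_inj.
have -> : ord0 = q0 :> 'I_4 by apply: val_inj.
rewrite /vb /= addr0 !spanmx_scale !spanmx_add; congr spanmx; ring.
Qed.

Lemma mul_d0 x : x * d1 = 0 -> x * d2 = 0 -> x = 0.
Proof.
move=> h1 h2; case/orP: hd => h.
  by move/eqP: h1; rewrite mulf_eq0 (negbTE h) orbF => /eqP.
by move/eqP: h2; rewrite mulf_eq0 (negbTE h) orbF => /eqP.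
Qed.

Lemma mul_d2 x : x * d1^+2 = 0 -> x * d2^+2 = 0 -> x = 0.
Proof.
move=> h1 h2; apply: mul_d0.
  by move/eqP: h1; rewrite mulf_eq0 sqrf_eq0 -mulf_eq0 => /eqP.
by move/eqP: h2; rewrite mulf_eq0 sqrf_eq0 -mulf_eq0 => /eqP.
Qed.

Lemma spanmx_inj0 a0 a1 a2 a3 : spanmx a0 a1 a2 a3 = 0 ->
  [/\ a0 = 0, a1 = 0, a2 = 0 & a3 = 0].
Proof.
move=> H; have e := fun i j => congr1 (fun M : 'M[C]_3 => M i j) H.
move: (e k11 k11) (e k11 k21) (e k11 k22) (e k21 k21) (e k21 k22) (e k22 k22).
rewrite !mxE /= => -[h00] [h01r h01i] [h02r h02i] [h11] [h12] [h22].
have a1z : a1 = 0 by apply: mul_d0.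
have a2z : a2 = 0 by apply: mul_d0.
have hdiff : a3 * d1^+2 - a3 * d2^+2 = 0.
  have -> : a3 * d1^+2 - a3 * d2^+2 = (a0*E2 + a3*d1^+2) - (a0*E2 + a3*d2^+2) by ring.
  by rewrite h11 h22 subrr.
have s1 : a3 * d1^+2 = 0.
  apply/eqP; rewrite -sqrf_eq0; apply/eqP.
  have -> : (a3 * d1^+2)^+2 = (a3*d1*d2)^+2 + a3 * d1^+2 * (a3 * d1^+2 - a3 * d2^+2) by ring.
  by rewrite h12 hdiff; ring.
have s2 : a3 * d2^+2 = 0.
  by move: hdiff; rewrite s1 sub0r => /eqP; rewrite oppr_eq0 => /eqP.
have a3z : a3 = 0 by apply: mul_d2.
have a0z : a0 = 0.
  move: h00 h11; rewrite a3z !mul0r !subr0 !addr0 => h00 h11.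
  have : a0 * (E2 - E1) = 0 by rewrite mulrBr h00 h11 subrr.
  by move/eqP; rewrite mulf_eq0 (negbTE hne) orbF => /eqP.
by [].
Qed.

Lemma L0_iff X : lie_gen (iC R *: H0 E1 E2) (iC R *: HI d1 d2) X <-> SP X.
Proof. by split; [apply: L0_SP | apply: SP_L0]. Qed.

Lemma dim4 : real_dim (lie_gen (iC R *: H0 E1 E2) (iC R *: HI d1 d2)) 4.
Proof.
exists vb; split.
- move=> i; apply/L0_iff; rewrite /vb; case: i => -[|[|[|[|?]]]] ? //=; by do 4 eexists.
- move=> c; rewrite sum_vb => /spanmx_inj0 [h0 h1 h2 h3].
  case=> -[|[|[|[|?]]]] ? //=.
  + by rewrite -h0; congr c; apply: val_inj.
  + by rewrite -h1; congr c; apply: val_inj.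
  + by rewrite -h2; congr c; apply: val_inj.
  + by rewrite -h3; congr c; apply: val_inj.
- move=> X /L0_iff [a0 [a1 [a2 [a3 ->]]]].
  exists (fun i : 'I_4 => match nat_of_ord i with 0 => a0 | 1 => a1 | 2 => a2 | _ => a3 end).
  by rewrite sum_vb.
Qed.


Definition co1 (A : 'M[C]_3) := (d1 * complex.Im (A k11 k21) + d2 * complex.Im (A k11 k22)) / Dd.
Definition co2 (A : 'M[C]_3) := (d1 * complex.Re (A k11 k21) + d2 * complex.Re (A k11 k22)) / Dd.
Definition cW (A : 'M[C]_3) := (d2^+2 * complex.Im (A k21 k21) - 2 * d1 * d2 * complex.Im (A k21 k22)
   + d1^+2 * complex.Im (A k22 k22)) / Dd.
Definition cB (A : 'M[C]_3) := (d1^+2 * complex.Im (A k21 k21) + 2 * d1 * d2 * complex.Im (A k21 k22)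
   + d2^+2 * complex.Im (A k22 k22)) / Dd.
Definition co0 (A : 'M[C]_3) := (2 * cW A - complex.Im (A k11 k11) - cB A) / (E2 - E1).
Definition co3 (A : 'M[C]_3) := (cB A - cW A) / Dd.

Lemma co_spanmx a0 a1 a2 a3 :
  [/\ co0 (spanmx a0 a1 a2 a3) = a0, co1 (spanmx a0 a1 a2 a3) = a1,
      co2 (spanmx a0 a1 a2 a3) = a2 & co3 (spanmx a0 a1 a2 a3) = a3].
Proof.
have hD := Dne; have hn := hne.
rewrite /co0 /co1 /co2 /co3 /cW /cB !mxE /= /Dd; split.
all: by field; rewrite ?hD ?hn.
Qed.


Definition Phi1 (s a0 a1 a2 a3 : R) : 'M[C]_2 :=
  \matrix_(i < 2, j < 2)
   match nat_of_ord i, nat_of_ord j with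
   | 0,0 => Complex 0 (a0*(E1-E2)/2 - a3*Dd)
   | 0,1 => Complex (a2*s) (a1*s)
   | 1,0 => Complex (-(a2*s)) (a1*s)
   | _,_ => Complex 0 (-(a0*(E1-E2)/2 - a3*Dd))
   end.

Ltac entries2 := apply/matrixP => -[[|[|?]] ?] -[[|[|?]] ?] //;
  rewrite !mxE ?big_ord_recl ?big_ord0 ?mxE /=.

Lemma Phi1_br s (sD : s^+2 = Dd) a0 a1 a2 a3 b0 b1 b2 b3 :
  lie_br (Phi1 s a0 a1 a2 a3) (Phi1 s b0 b1 b2 b3) =
  let: (c0,c1,c2,c3) := br a0 a1 a2 a3 b0 b1 b2 b3 in Phi1 s c0 c1 c2 c3.
Proof. rewrite /lie_br /br; entries2; csimp; rewrite -sD; congr Complex; by field. Qed.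

Lemma Phi1_add s a0 a1 a2 a3 b0 b1 b2 b3 :
  Phi1 s a0 a1 a2 a3 + Phi1 s b0 b1 b2 b3 = Phi1 s (a0+b0) (a1+b1) (a2+b2) (a3+b3).
Proof. entries2; csimp; congr Complex; ring. Qed.

Lemma Phi1_scale s r a0 a1 a2 a3 :
  rscale r (Phi1 s a0 a1 a2 a3) = Phi1 s (r*a0) (r*a1) (r*a2) (r*a3).
Proof. rewrite /rscale /rC; entries2; csimp; congr Complex; ring. Qed.

Lemma su_Phi1 s a0 a1 a2 a3 : su (Phi1 s a0 a1 a2 a3).
Proof.
split.
  rewrite /adj; entries2; csimp; congr Complex; ring.
rewrite /mxtrace !big_ord_recl big_ord0 !mxE /=; csimp; congr Complex; ring.
Qed.

Definition p0 : 'I_2 := @Ordinal 2 0 isT.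
Definition p1 : 'I_2 := @Ordinal 2 1 isT.

Lemma mx2P (M N : 'M[C]_2) : M p0 p0 = N p0 p0 -> M p0 p1 = N p0 p1 ->
  M p1 p0 = N p1 p0 -> M p1 p1 = N p1 p1 -> M = N.
Proof.
move=> h00 h01 h10 h11; apply/matrixP => i j.
case: i => [[|[|?]] Hi] //; case: j => [[|[|?]] Hj] //;
rewrite (bool_irrelevance Hi isT) (bool_irrelevance Hj isT) //.
Qed.

Definition M2 (u v w : R) : 'M[C]_2 :=
  \matrix_(i < 2, j < 2)
   match nat_of_ord i, nat_of_ord j with
   | 0,0 => Complex 0 u
   | 0,1 => Complex v w
   | 1,0 => Complex (-v) w
   | _,_ => Complex 0 (-u)
   end.

Lemma su2_form (X : 'M[C]_2) : su X -> exists u v w, X = M2 u v w.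
Proof.
move=> [hA hT].
have e := fun i j => congr1 (fun M : 'M[C]_2 => M i j) hA.
move: (e p0 p0) (e p1 p0) (e p1 p1) hT.
rewrite /mxtrace !big_ord_recl big_ord0 !mxE /=.
have -> : (lift ord0 ord0 : 'I_2) = p1 by apply: val_inj.
have -> : (ord0 : 'I_2) = p0 by apply: val_inj.
move=> h00 h10 h11 hT.
exists (complex.Im (X p0 p0)), (complex.Re (X p0 p1)), (complex.Im (X p0 p1)).
apply: mx2P; rewrite !mxE /=.
- move: h00; case: (X p0 p0) => r i; rewrite copp /= => /(congr1 (@complex.Re R)) /= hr.
  congr Complex; lra.
- by case: (X p0 p1).
- move: h10; case: (X p0 p1) => r i; case: (X p1 p0) => r' i'; rewrite copp /= => h.
  move: (congr1 (@complex.Re R) h) (congr1 (@complex.Im R) h) => /= h1 h2.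
  congr Complex; lra.
- move: h00 h11 hT; case: (X p0 p0) => r i; case: (X p1 p1) => r' i'; rewrite !copp addr0 cadd /=.
  move=> h h' hT.
  move: (congr1 (@complex.Re R) h) (congr1 (@complex.Re R) h') (congr1 (@complex.Im R) hT) => /= h1 h2 h3.
  congr Complex; lra.
Qed.


Definition phi (s : R) (A : 'M[C]_3) : 'M[C]_2 * C :=
  (Phi1 s (co0 A) (co1 A) (co2 A) (co3 A), Complex 0 (co0 A)).

Lemma phi_spanmx s a0 a1 a2 a3 :
  phi s (spanmx a0 a1 a2 a3) = (Phi1 s a0 a1 a2 a3, Complex 0 a0).
Proof. by rewrite /phi; case: (co_spanmx a0 a1 a2 a3) => -> -> -> ->. Qed.

Lemma tr3 (A : 'M[C]_3) : \tr A = A k11 k11 + A k21 k21 + A k22 k22.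
Proof.
rewrite /mxtrace !big_ord_recl big_ord0 addr0 addrA.
by congr (_ + _ + _); congr (A _ _); apply: val_inj.
Qed.

Lemma not_su3 : ~ (forall X : 'M[C]_3, su X -> lie_gen (iC R *: H0 E1 E2) (iC R *: HI d1 d2) X).
Proof.
move=> H.
have hX : su (delta_mx k21 k22 - delta_mx k22 k21 : 'M[C]_3).
  split.
    by rewrite /adj; entries; csimp; congr Complex; ring.
  by rewrite tr3 !mxE /=; csimp; congr Complex; ring.
case/L0_iff: (H _ hX) => a0 [a1 [a2 [a3 h]]].
move: (congr1 (fun M : 'M[C]_3 => M k21 k22) h); rewrite !mxE /= => /(congr1 (@complex.Re R)) /=.
by rewrite subr0 => /eqP; rewrite oner_eq0.
Qed.

Lemma iso_L0 s (sD : s^+2 = Dd) (sn : s != 0) :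
  iso_su2_u1 (lie_gen (iC R *: H0 E1 E2) (iC R *: HI d1 d2)).
Proof.
have hD := Dne; have hn := hne.
exists (phi s); split.
- move=> A B /L0_iff [a0 [a1 [a2 [a3 ->]]]] /L0_iff [b0 [b1 [b2 [b3 ->]]]].
  by rewrite spanmx_add !phi_spanmx /= Phi1_add cadd addr0.
- move=> r A /L0_iff [a0 [a1 [a2 [a3 ->]]]].
  rewrite spanmx_scale !phi_spanmx /= Phi1_scale /rC cmul; congr pair; congr Complex; ring.
- move=> A B /L0_iff [a0 [a1 [a2 [a3 ->]]]] /L0_iff [b0 [b1 [b2 [b3 ->]]]].
  by rewrite br_spanmx (phi_spanmx s a0) (phi_spanmx s b0) /= phi_spanmx (Phi1_br _ sD).
- move=> A B /L0_iff [a0 [a1 [a2 [a3 ->]]]] /L0_iff [b0 [b1 [b2 [b3 ->]]]].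
  rewrite !phi_spanmx => -[hM h0].
  have e := fun i j => congr1 (fun M : 'M[C]_2 => M i j) hM.
  move: (e p0 p0) (e p0 p1); rewrite !mxE /= => -[h00] [h01r h01i].
  have e2 : a2 = b2 by apply: (mulIf sn).
  have e1 : a1 = b1 by apply: (mulIf sn).
  have e3 : a3 = b3.
    move: h00; rewrite h0 /Dd => h; apply: (mulIf hD); lra.
  by rewrite h0 e1 e2 e3.
- case=> X z; split.
  + move=> [/= /su2_form [u [v [w ->]]] hz].
    have zr : complex.Re z = 0.
      move: hz; rewrite /u1; case: z => r i; rewrite copp /= => /(congr1 (@complex.Re R)) /=.
      lra.
    exists (spanmx (complex.Im z) (w/s) (v/s) (((complex.Im z)*(E1-E2)/2 - u)/Dd)).
      by apply/L0_iff; do 4 eexists.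
    rewrite phi_spanmx; congr pair.
      apply: mx2P; rewrite !mxE /=; congr Complex; rewrite /Dd; by field; rewrite ?sn ?hD.
    by move: zr hz; case: z => r i /= -> _.
  + move=> [A /L0_iff [a0 [a1 [a2 [a3 ->]]]] <-]; rewrite phi_spanmx; split.
      exact: su_Phi1.
    by rewrite /u1 /= copp oppr0.
Qed.

End P.

Theorem mainTheorem2 (R : rcfType) (E1 E2 d1 d2 : R) :
  E1 < E2 -> (d1 != 0) || (d2 != 0) ->
  let L0 := lie_gen (iC R *: H0 E1 E2) (iC R *: HI d1 d2) in
  [/\ real_dim L0 4,
      iso_su2_u1 L0,
      ~ (forall X : 'M[complex R]_3, su X -> L0 X) &
      ~ completely_controllable (H0 E1 E2) (HI d1 d2)].
Proof.
move=> hE hd L0.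
have hD := @Dpos R d1 d2 hd.
have sD : Num.sqrt (Dd R d1 d2) ^+ 2 = Dd R d1 d2 by rewrite sqr_sqrtr // ltW.
have sn : Num.sqrt (Dd R d1 d2) != 0 by rewrite sqrtr_eq0 -ltNge.
split.
- exact: dim4.
- exact: (@iso_L0 R E1 E2 d1 d2 hE hd _ sD sn).
- exact: not_su3.
- exact: not_su3.
Qed.
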